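(* Let $p\ge2$ and $n,\ell,t$ be positive integers with $n\ge\ell$. For integers $w,r\ge0$ let $\xi_r$ be a prime with $\max(t,r)<\xi_r\le2\max(t,r)+1$ and let $\mathbf{a}^*_{r,w}\in\{0,\dots,\xi_r-1\}^t$ maximize $|\mathcal{C}_{2,t,1}(r+w,r,\mathbf{a},\xi_r)|$ over $\mathbf{a}$. Define $$\mathcal{C}^2=\bigcup_{w=0}^{\lfloor n/\ell\rfloor-1}\bigl\{\mathbf{x}\in\mathbb{Z}_p^n:\ \mu(\mathbf{x})\in\mathbb{Z}_p^{n-(w+1)\ell},\ \pi(\mathbf{x})\in\mathcal{C}_{2,t,1}(r+w,r,\mathbf{a}^*_{r,w},\xi_r)\text{ where }r=\mathrm{wt}_H(\mu(\mathbf{x}))\bigr\}.$$ Then $$|\mathcal{C}^2|\ge p^\ell\sum_{w=0}^{\lfloor n/\ell\rfloor-1}\ \sum_{r=0}^{n-(w+1)\ell}\frac{N_{p,\ell}\bigl(n-(w+1)\ell,r\bigr)\binom{r+w}{w}}{(2\max(r,t)+1)^t}.$$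
   Context: $\mathbb{Z}_p=\{0,1,\dots,p-1\}$ with arithmetic mod $p$. For $\mathbf{x}\in\mathbb{Z}_p^n$ let $\mathbf{z}\in\mathbb{Z}_p^{n-\ell}$ with $z_i=x_{i+\ell}-x_i$ ($1\le i\le n-\ell$), and write uniquely $\mathbf{z}=0^{b_1}u_10^{b_2}u_2\cdots u_r0^{b_{r+1}}$ with $u_i\in\mathbb{Z}_p\setminus\{0\}$, $b_i\ge0$. Define the duplication root $\mu(\mathbf{x})=0^{b_1\bmod\ell}u_10^{b_2\bmod\ell}u_2\cdots u_r0^{b_{r+1}\bmod\ell}$ and the binary word $\pi(\mathbf{x})=0^{\lfloor b_1/\ell\rfloor}1\,0^{\lfloor b_2/\ell\rfloor}1\cdots1\,0^{\lfloor b_{r+1}/\ell\rfloor}$ (with $r$ ones). For binary words: any $\mathbf{s}\in\{0,1\}^m$ of Hamming weight $r$ is $\mathbf{s}=0^{c_1}1\,0^{c_2}1\cdots1\,0^{c_{r+1}}$, and for a prime $\xi$ and $\mathbf{a}\in\{0,\dots,\xi-1\}^t$, $$\mathcal{C}_{2,t,1}(m,r,\mathbf{a},\xi)=\Bigl\{\mathbf{s}\in\{0,1\}^m:\ \mathrm{wt}_H(\mathbf{s})=r,\ \sum_{i=1}^{r+1}i^q c_i\equiv a_q\pmod{\xi}\ \forall\,1\le q\le t\Bigr\}.$$ $N_{p,\ell}(m,r)$ denotes the number of words in $\mathbb{Z}_p^m$ of Hamming weight $r$ containing no $\ell$ consecutive zeros. *)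

(* Defs.v *)
(* Words over Z_p are handled as seq nat (entries < p). *)
From mathcomp Require Import all_boot all_order all_algebra.
Set Implicit Arguments. Unset Strict Implicit. Unset Printing Implicit Defensive.

(* Zero-run lengths b_1,...,b_{r+1} of z = 0^{b_1} u_1 ... u_r 0^{b_{r+1}}
   (u_i nonzero).  Always of size r+1. *)
Fixpoint zruns (s : seq nat) : seq nat :=
  match s with
  | [::] => [:: 0]
  | a :: s' => let bs := zruns s' in
               if a == 0 then (head 0 bs).+1 :: behead bs else 0 :: bs
  end.

Definition nonzeros (s : seq nat) : seq nat := filter (fun a => a != 0) s.

Definition wtH (s : seq nat) : nat := count (fun a => a != 0) s.

(* z_i = x_{i+l} - x_i mod p, 1 <= i <= n - l (here 0-based) *)
Definition diffs (p l : nat) (x : seq nat) : seq nat :=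
  [seq (nth 0 x (i + l) + p - nth 0 x i) %% p | i <- iota 0 (size x - l)].

(* 0^{b_1 mod l} u_1 ... u_r 0^{b_{r+1} mod l} *)
Definition dup_root_z (l : nat) (z : seq nat) : seq nat :=
  flatten [seq nseq (nth 0 (zruns z) i %% l) 0 ++ take 1 (drop i (nonzeros z))
          | i <- iota 0 (size (zruns z))].

(* 0^{b_1 / l} 1 0^{b_2 / l} 1 ... 1 0^{b_{r+1} / l} *)
Definition pi_z (l : nat) (z : seq nat) : seq bool :=
  flatten [seq nseq (nth 0 (zruns z) i %/ l) false
               ++ (if i < size (nonzeros z) then [:: true] else [::])
          | i <- iota 0 (size (zruns z))].

Definition mu (p l : nat) (x : seq nat) : seq nat := dup_root_z l (diffs p l x).
Definition piw (p l : nat) (x : seq nat) : seq bool := pi_z l (diffs p l x).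

Definition inC2 (t m r : nat) (a : seq nat) (xi : nat) (s : seq bool) : bool :=
  let c := zruns (map nat_of_bool s) in
  [&& size s == m, count id s == r &
      all (fun q => (\sum_(i < size c) (i.+1) ^ q * nth 0 c i) %% xi
                    == nth 0 a q.-1 %% xi) (iota 1 t)].

Definition C2card (t m r : nat) (a : seq nat) (xi : nat) : nat :=
  #|[set s : m.-tuple bool | inC2 t m r a xi s]|.

Definition Nwords (p l m r : nat) : nat :=
  #|[set s : m.-tuple 'I_p |
       (wtH (map val s) == r) && ~~ infix (nseq l 0) (map val s)]|.

(* Main.v *)
Require Import Defs.
From mathcomp Require Import all_boot all_order all_algebra.
From mathcomp Require Import zify.
Set Implicit Arguments. Unset Strict Implicit. Unset Printing Implicit Defensive.

Fixpoint bldr (bs us : seq nat) : seq nat :=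
  match bs with
  | [::] => [::]
  | b :: bs' => nseq b 0 ++ take 1 us ++ bldr bs' (behead us)
  end.

Definition bld (bs us : seq nat) : seq nat :=
  flatten [seq nseq (nth 0 bs i) 0 ++ take 1 (drop i us) | i <- iota 0 (size bs)].

Lemma bldE bs us : bld bs us = bldr bs us.
Proof.
elim: bs us => [|b bs IH] us //=.
rewrite /bld /= drop0 -IH /bld -catA; congr (_ ++ _ ++ _).
have -> : iota 1 (size bs) = map (addn 1) (iota 0 (size bs)) by rewrite -iotaDl.
rewrite -map_comp; congr flatten; apply: eq_map => i /=.
by rewrite add1n /= -drop1 drop_drop addn1.
Qed.

Lemma zruns_neq s : zruns s != [::].
Proof. by case: s => //= a s; case: ifP. Qed.

Lemma zruns_size s : size (zruns s) = (size (nonzeros s)).+1.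
Proof.
elim: s => //= a s IH; rewrite /nonzeros /=; case: eqP => [->|] /=.
  by case E: (zruns s) (zruns_neq s) IH => [|b bs] //= _ ->.
by rewrite IH.
Qed.

Lemma bldr_zruns s : bldr (zruns s) (nonzeros s) = s.
Proof.
elim: s => //= a s IH; rewrite /nonzeros /=; case: eqP => [->|/eqP a0] /=.
  case E: (zruns s) (zruns_neq s) IH => [|b bs] //= _.
  by rewrite /nonzeros => ->.
by rewrite take0 -/(nonzeros s) IH.
Qed.

Lemma zruns_nseq_cons b u rest : u != 0 ->
  zruns (nseq b 0 ++ u :: rest) = b :: zruns rest.
Proof.
move=> u0; elim: b => [|b IH] /=; first by rewrite (negbTE u0).
by rewrite IH.
Qed.

Lemma zruns_nseq b : zruns (nseq b 0) = [:: b].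
Proof. by elim: b => //= b ->. Qed.

Lemma bldr_runs bs us : size bs = (size us).+1 -> all (fun u => u != 0) us ->
  zruns (bldr bs us) = bs /\ nonzeros (bldr bs us) = us.
Proof.
elim: bs us => [|b bs IH] [|u us] //=.
  case: bs IH => //= _ _ _; rewrite cats0 zruns_nseq; split=> //.
  by rewrite /nonzeros filter_nseq; case: b.
move=> [] Hs /andP [u0 Hu]; have [H1 H2] := IH us Hs Hu.
rewrite take0 /= zruns_nseq_cons // H1; split=> //.
by rewrite /nonzeros filter_cat filter_nseq /= u0 -/(nonzeros _) H2.
Qed.

Lemma size_bldr bs us : size bs = (size us).+1 ->
  size (bldr bs us) = sumn bs + size us.
Proof.
elim: bs us => [|b bs IH] [|u us] //=.
  by case: bs IH => //= _ _; rewrite ?cats0 size_nseq !addn0.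
move=> [] Hs; rewrite size_cat size_nseq /= take0 /= IH //; lia.
Qed.

Lemma mem_bldr bs us x : x \in bldr bs us -> x = 0 \/ x \in us.
Proof.
elim: bs us => [|b bs IH] us //=.
rewrite !mem_cat => /orP [/nseqP [] -> _|/orP [H|/IH [->|H]]]; try by left.
  by right; apply: mem_take H.
by right; case: us H => //= u us H; rewrite inE H orbT.
Qed.

Lemma prefix_zruns s : prefix (nseq (head 0 (zruns s)) 0) s.
Proof.
elim: s => //= a s IH; case: eqP => [->|] //=.
Qed.

Lemma infix_zruns s b : b \in zruns s -> infix (nseq b 0) s.
Proof.
elim: s => [|a s IH]; first by rewrite /= inE => /eqP ->.
rewrite [zruns _]/=; case: eqP => [->|_].
  case E: (zruns s) (zruns_neq s) IH (prefix_zruns s) => [|c cs] // _ IH Hp.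
  rewrite [head _ _]/= [behead _]/= inE => /orP [/eqP ->|H].
    by apply: prefixW; rewrite [nseq _ _]/= prefix_cons eqxx.
  rewrite infix_consl; apply/orP; right; apply: IH; by rewrite inE H orbT.
rewrite inE => /orP [/eqP ->|H]; first by apply: prefixW.
by rewrite infix_consl (IH H) orbT.
Qed.

Lemma zruns_lt l s : ~~ infix (nseq l 0) s -> all (fun b => b < l) (zruns s).
Proof.
move=> H; apply/allP => b /infix_zruns Hb; rewrite ltnNge; apply/negP => lb.
move/negP: H; apply; apply: prefix_infix_trans Hb.
by rewrite -(subnKC lb) nseqD prefix_prefix.
Qed.

Fixpoint comb (l : nat) (bs cs : seq nat) : seq nat :=
  match bs, cs with
  | b :: bs', c :: cs' => (b + l * c) :: comb l bs' cs'
  | _, _ => [::]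
  end.

Lemma size_comb l bs cs : size bs = size cs -> size (comb l bs cs) = size bs.
Proof. by elim: bs cs => [|b bs IH] [|c cs] //= [] /IH ->. Qed.

Lemma sumn_comb l bs cs : size bs = size cs ->
  sumn (comb l bs cs) = sumn bs + l * sumn cs.
Proof. elim: bs cs => [|b bs IH] [|c cs] //= => [_|[] /IH ->]; lia. Qed.

Lemma nth_comb l bs cs i : size bs = size cs -> i < size bs ->
  nth 0 (comb l bs cs) i = nth 0 bs i + l * nth 0 cs i.
Proof.
elim: bs cs i => [|b bs IH] [|c cs] [|i] //= [] Hs Hi; exact: IH.
Qed.

Definition sbool (s : seq bool) : seq nat := map nat_of_bool s.

Lemma nonzeros_sbool s : nonzeros (sbool s) = nseq (count id s) 1.
Proof. by elim: s => //= -[] s IH; rewrite /nonzeros /= -/(nonzeros _) IH. Qed.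

Definition zc l (y : seq nat) (s : seq bool) : seq nat :=
  bldr (comb l (zruns y) (zruns (sbool s))) (nonzeros y).

Lemma wtH_size y : wtH y = size (nonzeros y).
Proof. by rewrite /wtH /nonzeros size_filter. Qed.

Lemma nonzeros_all y : all (fun u => u != 0) (nonzeros y).
Proof. exact: filter_all. Qed.

Section Z.
Variables (l : nat) (y : seq nat) (s : seq bool).
Hypotheses (l0 : 0 < l) (Hinf : ~~ infix (nseq l 0) y) (Hc : count id s = wtH y).

Let bs := zruns y.
Let cs := zruns (sbool s).
Let us := nonzeros y.

Lemma sz_bc : size bs = size cs.
Proof.
by rewrite /bs /cs !zruns_size nonzeros_sbool size_nseq Hc wtH_size.
Qed.

Lemma zc_runs : zruns (zc l y s) = comb l bs cs /\ nonzeros (zc l y s) = us.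
Proof.
apply: bldr_runs; last exact: nonzeros_all.
by rewrite size_comb sz_bc // /cs zruns_size nonzeros_sbool size_nseq Hc wtH_size.
Qed.

Lemma mu_zc : dup_root_z l (zc l y s) = y.
Proof.
have [H1 H2] := zc_runs.
have blt := zruns_lt Hinf.
rewrite /dup_root_z H1 H2 (size_comb _ sz_bc) -[RHS]bldr_zruns -bldE /bld -/bs -/us.
congr flatten; apply/eq_in_map => i; rewrite mem_iota add0n => /andP [_ Hi].
rewrite (nth_comb _ sz_bc Hi) addnC mulnC modnMDl modn_small //.
by apply: (allP blt); apply: mem_nth.
Qed.

Lemma pi_zc : pi_z l (zc l y s) = s.
Proof.
have [H1 H2] := zc_runs.
have blt := zruns_lt Hinf.
apply: (@inj_map _ _ nat_of_bool); first by case=> [] [].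
rewrite -/(sbool s) -[RHS]bldr_zruns -bldE /bld /pi_z H1 H2 (size_comb _ sz_bc).
rewrite map_flatten -map_comp -/cs -sz_bc; congr flatten; apply/eq_in_map => i.
rewrite mem_iota add0n => /andP [_ Hi] /=.
rewrite map_cat map_nseq (nth_comb _ sz_bc Hi) addnC mulnC divnMDl // divn_small ?addn0; last first.
  by apply: (allP blt); apply: mem_nth.
congr (_ ++ _); rewrite nonzeros_sbool drop_nseq /us -wtH_size -Hc.
by case: ifP => H; case E: (count id s - i) => [|k] //=; rewrite ?take0 //; lia.
Qed.
End Z.

Lemma size_sbool s : size (sbool s) = sumn (zruns (sbool s)) + count id s.
Proof.
rewrite -{1}(bldr_zruns (sbool s)) size_bldr ?zruns_size //.
by rewrite nonzeros_sbool size_nseq.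
Qed.

Lemma size_y y : size y = sumn (zruns y) + size (nonzeros y).
Proof. by rewrite -{1}(bldr_zruns y) size_bldr ?zruns_size. Qed.

Lemma size_zc l y s : count id s = wtH y ->
  size (zc l y s) = size y + l * (size s - count id s).
Proof.
move=> Hc.
have Hsz : size (zruns y) = size (zruns (sbool s)).
  by rewrite !zruns_size nonzeros_sbool size_nseq Hc wtH_size.
rewrite /zc size_bldr; last by rewrite size_comb // zruns_size.
rewrite sumn_comb // [in RHS]size_y.
have := size_sbool s; rewrite size_map => ->; lia.
Qed.

Lemma all_zc p l y s : 0 < p -> all (fun a => a < p) y -> all (fun a => a < p) (zc l y s).
Proof.
move=> p0 Hy; apply/allP => x /mem_bldr [->//|].
by rewrite mem_filter => /andP [_ /(allP Hy)].
Qed.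

Lemma modsub_lem p B z : B < p -> z < p -> ((B + z) %% p + p - B) %% p = z.
Proof.
move=> Bp zp; case: (ltnP (B + z) p) => H.
  rewrite (modn_small H) (_ : B + z + p - B = z + p); last by lia.
  by rewrite modnDr modn_small.
have -> : B + z = (B + z - p) + p by lia.
rewrite modnDr (@modn_small (B + z - p)); last by lia.
have -> : B + z - p + p - B = z by lia.
by rewrite modn_small.
Qed.

Section X.
Variables (p l n : nat).
Hypotheses (p0 : 0 < p) (l0 : 0 < l) (ln : l <= n).

Definition xraw (pre z : seq nat) (j : nat) : nat :=
  (nth 0 pre (j %% l) + \sum_(k < j %/ l) nth 0 z (j %% l + k * l)) %% p.

Definition xtup (pre z : seq nat) : n.-tuple 'I_p :=
  [tuple Ordinal (ltn_pmod (xraw pre z i) p0) | i < n].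

Lemma xtupE pre z : map val (xtup pre z) = map (xraw pre z) (iota 0 n).
Proof.
apply: (@eq_from_nth _ 0).
  by rewrite (size_map val (xtup pre z)) size_tuple size_map size_iota.
move=> i; rewrite (size_map val (xtup pre z)) size_tuple => Hi.
rewrite (nth_map (Ordinal p0) 0) ?size_tuple // (nth_map 0) ?size_iota //.
by rewrite -(tnth_nth _ _ (Ordinal Hi)) tnth_mktuple /= nth_iota // add0n /xraw modn_mod.
Qed.

Lemma diffs_x pre z : size z = n - l -> all (fun a => a < p) z ->
  diffs p l (map val (xtup pre z)) = z.
Proof.
move=> Hz Hza; rewrite xtupE /diffs size_map size_iota -Hz.
rewrite -[RHS](mkseq_nth 0); apply/eq_in_map => i; rewrite mem_iota add0n => /andP [_ Hi].
rewrite (nth_map 0) ?size_iota; last by lia.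
rewrite (nth_map 0) ?size_iota; last by lia.
rewrite !nth_iota; try lia.
rewrite !add0n /xraw modnDr.
have -> : (i + l) %/ l = (i %/ l).+1.
  by rewrite -{1}(mul1n l) addnC divnMDl // add1n.
rewrite big_ord_recr /= addnA -(modnDml (_ + _)).
have -> : i %% l + i %/ l * l = i by rewrite addnC -divn_eq.
rewrite modsub_lem ?ltn_pmod //.
by apply: (allP Hza); apply: mem_nth.
Qed.

Lemma take_x pre z : size pre = l -> all (fun a => a < p) pre ->
  take l (map val (xtup pre z)) = pre.
Proof.
move=> Hs Ha; rewrite xtupE -map_take take_iota.
have -> : minn l n = l by lia.
rewrite -[RHS](mkseq_nth 0) Hs; apply/eq_in_map => i; rewrite mem_iota add0n => /andP [_ Hi].
rewrite /xraw modn_small // divn_small // big_ord0 addn0 modn_small //.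
by apply: (allP Ha); apply: mem_nth; rewrite Hs.
Qed.
End X.

Lemma binom_le_S m r :
  'C(m, r) <= #|[set s : m.-tuple bool | count id s == r]|.
Proof.
have := card_draws 'I_m r; rewrite card_ord => <-.
pose g (A : {set 'I_m}) : m.-tuple bool := [tuple i \in A | i < m].
have ginj : injective g.
  move=> A B E; apply/setP => i.
  by have := congr1 (fun t => tnth t i) E; rewrite /g !tnth_mktuple.
rewrite -(card_imset _ ginj); apply: subset_leq_card; apply/subsetP => s /imsetP [A].
rewrite inE => /eqP <- ->; rewrite inE /g.
rewrite /= count_map cardE /enum_mem size_filter (@eq_filter _ _ predT) // filter_predT; apply/eqP; exact: eq_count.
Qed.

Lemma nth_val_tuple k n (tt : n.-tuple 'I_k) i (Hi : i < n) :
  nth 0 (map val tt) i = val (tnth tt (Ordinal Hi)).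
Proof.
case: k tt => [|k] tt; first by case: (tnth tt (Ordinal Hi)).
by rewrite (tnth_nth ord0) (nth_map ord0) ?size_tuple.
Qed.

Section Part.
Variables (t m r xi : nat) (astar : seq nat).
Hypotheses (xi0 : 0 < xi) (Hsz : size astar = t) (Hall : all (fun a => a < xi) astar)
  (Hmax : forall a : seq nat, size a = t -> all (fun b => b < xi) a ->
            C2card t m r a xi <= C2card t m r astar xi).

Definition qv (s : seq bool) (q : nat) : nat :=
  let c := zruns (map nat_of_bool s) in
  \sum_(i < size c) (i.+1) ^ q * nth 0 c i.

Definition phi (s : m.-tuple bool) : t.-tuple 'I_xi :=
  [tuple Ordinal (ltn_pmod (qv s q.+1) xi0) | q < t].

Lemma phi_in (s : m.-tuple bool) : count id s == r -> inC2 t m r (map val (phi s)) xi s.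
Proof.
move=> Hc; rewrite /inC2 size_tuple eqxx Hc !andTb; apply/allP => q.
rewrite mem_iota => /andP [q1 qt].
have Hq : q.-1 < t by lia.
rewrite (nth_val_tuple _ Hq) tnth_mktuple /= prednK // !modn_mod.
by [].
Qed.

Lemma part_bound : #|[set s : m.-tuple bool | count id s == r]| <= xi ^ t * C2card t m r astar xi.
Proof.
rewrite -sum1_card (partition_big phi predT) //=.
apply: (@leq_trans (\sum_(a : t.-tuple 'I_xi) C2card t m r astar xi)); last first.
  by rewrite sum_nat_const card_tuple card_ord.
apply: leq_sum => a _.
apply: (@leq_trans (C2card t m r (map val a) xi)).
  rewrite sum1_card /C2card; apply: subset_leq_card; apply/subsetP => s.
  move=> /andP [Hc /eqP <-]; rewrite inE; apply: phi_in; move: Hc; by rewrite inE.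
apply: Hmax; first by rewrite size_map; exact: (size_tuple a).
apply/allP => b /mapP [x _ ->]; exact: ltn_ord.
Qed.
End Part.

Lemma sum_le1 (I : finType) (F : I -> nat) :
  (forall i, F i <= 1) -> (forall i j, 0 < F i -> 0 < F j -> i = j) ->
  \sum_i F i <= 1.
Proof.
move=> H1 Hu; case: (pickP (fun i => 0 < F i)) => [i0 Hi0|H0].
  rewrite (bigD1 i0) //= big1 ?addn0 // => j Hj.
  case: (posnP (F j)) => // Fj; by rewrite (Hu _ _ Fj Hi0) eqxx in Hj.
by rewrite big1 // => i; have := H0 i => /= /negbT; rewrite lt0n negbK => /eqP.
Qed.

Lemma sum_pos (I : finType) (F : I -> nat) : 0 < \sum_i F i -> exists i, 0 < F i.
Proof.
case: (pickP (fun i => 0 < F i)) => [i0 Hi0|H0]; first by exists i0.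
by rewrite big1 // => i; have := H0 i => /= /negbT; rewrite lt0n negbK => /eqP.
Qed.

Lemma disj_sum (T : finType) (C : {set T}) (K : nat) (R : 'I_K -> nat)
  (F : forall w : 'I_K, 'I_(R w) -> {set T}) (key : T -> nat * nat) (g : 'I_K -> nat) :
  injective g ->
  (forall w r, F w r \subset C) ->
  (forall w r x, x \in F w r -> key x = (g w, val r)) ->
  \sum_(w < K) \sum_(r < R w) #|F w r| <= #|C|.
Proof.
move=> ginj HC Hk.
apply: (@leq_trans (\sum_(w < K) \sum_(r < R w) \sum_(x in C) (key x == (g w, val r) : nat))).
  apply: leq_sum => w _; apply: leq_sum => r _.
  rewrite -big_mkcondr /= sum1_card; apply: subset_leq_card; apply/subsetP => x Hx.
  apply/andP; split; first exact: (subsetP (HC w r)).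
  by rewrite (Hk _ _ _ Hx).
rewrite (eq_bigr (fun w => \sum_(x in C) \sum_(r < R w) (key x == (g w, val r) : nat))); last first.
  by move=> w _; rewrite exchange_big.
rewrite exchange_big -sum1_card; apply: leq_sum => x _.
apply: sum_le1.
  move=> w; apply: sum_le1 => [r|r1 r2]; first exact: leq_b1.
  by rewrite !lt0b => /eqP -> /eqP [] /val_inj.
move=> w1 w2 /sum_pos [r1 +] /sum_pos [r2 +].
by rewrite !lt0b => /eqP -> /eqP [] /ginj.
Qed.

Lemma tuple_map_val_inj k n (a b : n.-tuple 'I_k) : map val a = map val b -> a = b.
Proof. by move=> H; apply: val_inj; exact: (inj_map val_inj H). Qed.

Lemma all_val k (y : seq 'I_k) : all (fun a => a < k) (map val y).
Proof. by apply/allP => b /mapP [x _ ->]; exact: ltn_ord. Qed.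

Section F.
Variables (p l n : nat).
Hypotheses (p0 : 0 < p) (l0 : 0 < l).

Lemma f_props w (r : nat) (pre : l.-tuple 'I_p) (y : seq nat) (s : seq bool) :
  w.+1 * l <= n -> size y = n - w.+1 * l -> all (fun a => a < p) y -> wtH y = r ->
  ~~ infix (nseq l 0) y -> size s = r + w -> count id s = r ->
  let x := map val (xtup l n p0 (map val pre) (zc l y s)) in
  [/\ take l x = map val pre, mu p l x = y & piw p l x = s].
Proof.
move=> wn Hy Hya Hw Hinf Hs Hc x.
have ln : l <= n by move: wn; rewrite mulSn; lia.
have Hc' : count id s = wtH y by rewrite Hc Hw.
have Hd : diffs p l x = zc l y s.
  apply: diffs_x => //; last exact: all_zc.
  rewrite size_zc // Hy Hs Hc; move: wn; rewrite mulSn; nia.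
split.
- by apply: take_x => //; [rewrite size_map size_tuple | exact: all_val].
- by rewrite /mu Hd mu_zc.
- by rewrite /piw Hd pi_zc.
Qed.
End F.

Unset Implicit Arguments. Set Strict Implicit.
Import GRing.Theory Num.Theory.
Local Open Scope ring_scope.

Theorem lemma7 (p n l t : nat) (xi : nat -> nat) (astar : nat -> nat -> seq nat) :
  (1 < p)%N -> (0 < n)%N -> (0 < l)%N -> (0 < t)%N -> (l <= n)%N ->
  (forall r : nat, prime (xi r) /\ (maxn t r < xi r <= (maxn t r).*2.+1)%N) ->
  (forall r w : nat,
      [/\ size (astar r w) = t,
          all (fun a => a < xi r)%N (astar r w) &
          forall a : seq nat, size a = t -> all (fun b => b < xi r)%N a ->
            (C2card t (r + w) r a (xi r) <= C2card t (r + w) r (astar r w) (xi r))%N]) ->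
  let C := [set x : n.-tuple 'I_p |
              [exists w : 'I_(n %/ l),
                 let mx := mu p l (map val x) in
                 let r := wtH mx in
                 (size mx == n - w.+1 * l)%N &&
                 inC2 t (r + w) r (astar r w) (xi r) (piw p l (map val x))]] in
  (p ^ l)%:R *
    \sum_(w < n %/ l) \sum_(r < (n - w.+1 * l).+1)
        ((Nwords p l (n - w.+1 * l) r * 'C(r + w, w))%:R
           / ((maxn r t).*2.+1 ^ t)%:R)
  <= (#|C|)%:R :> rat.
Proof.
move=> p1 n0 l0 t0 ln Hxi Hast; cbv zeta; set C := [set x : n.-tuple _ | _].
have p0 : (0 < p)%N by apply: ltnW.
have HB : forall w r : nat,
    ('C(r + w, w) <= (maxn r t).*2.+1 ^ t * C2card t (r + w) r (astar r w) (xi r))%N.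
  move=> w r; have [xpr /andP [xlo xhi]] := Hxi r.
  have xi0 : (0 < xi r)%N := prime_gt0 xpr.
  have [Hs Ha Hm] := Hast r w.
  have Hrw : (r <= r + w)%N by lia.
  have -> : 'C(r + w, w) = 'C(r + w, r) by rewrite -(bin_sub Hrw) addKn.
  apply: leq_trans (binom_le_S _ _) _.
  apply: leq_trans (part_bound xi0 Hs Ha Hm) _.
  by rewrite leq_mul2r leq_exp2r // maxnC xhi orbT.
pose m (w : nat) := (n - w.+1 * l)%N.
pose NS (w r : nat) := [set s : (m w).-tuple 'I_p |
       (wtH (map val s) == r) && ~~ infix (nseq l 0) (map val s)].
pose CS (w r : nat) := [set s : (r + w).-tuple bool | inC2 t (r + w) r (astar r w) (xi r) s].
pose D (w r : nat) := setX (setX [set: l.-tuple 'I_p] (NS w r)) (CS w r).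
pose f (w r : nat) (u : (l.-tuple 'I_p * (m w).-tuple 'I_p) * (r + w).-tuple bool) :=
  xtup l n p0 (map val u.1.1) (zc l (map val u.1.2) u.2).
pose F (w : 'I_(n %/ l)) (r : 'I_(m w).+1) := f w r @: D w r.
have wn : forall w : 'I_(n %/ l), (w.+1 * l <= n)%N.
  move=> w; apply: leq_trans (leq_trunc_div n l); rewrite leq_mul2r ltn_ord orbT //.
have Fprops : forall (w : 'I_(n %/ l)) (r : nat) u, u \in D w r ->
    let x := map val (f w r u) in
    [/\ take l x = map val u.1.1, mu p l x = map val u.1.2 & piw p l x = u.2].
  move=> w r [[pre y] s]; rewrite !inE => /andP [/andP [_ /andP [/eqP Hw Hinf]] Hs].
  apply: f_props => //.
  - by rewrite size_map size_tuple.
  - exact: all_val.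
  - by rewrite /= size_tuple Hw.
  - by move: Hs; rewrite /inC2 => /and3P [_ /eqP ->].
have HA : (\sum_(w < n %/ l) \sum_(r < (m w).+1)
            (p ^ l * Nwords p l (m w) r * C2card t (r + w) r (astar r w) (xi r)) <= #|C|)%N.
  apply: leq_trans (disj_sum (F := F)
     (key := fun x : n.-tuple 'I_p => (size (mu p l (map val x)), wtH (mu p l (map val x))))
     (g := fun w : 'I_(n %/ l) => m w) _ _ _).
  - apply: leq_sum => w _; apply: leq_sum => r _.
    rewrite card_in_imset.
      by rewrite !cardsX cardsT card_tuple card_ord.
    move=> u1 u2 H1 H2 E.
    have [A1 B1 C1] := Fprops w r u1 H1.
    have [A2 B2 C2] := Fprops w r u2 H2.
    move: A1 B1 C1 A2 B2 C2; rewrite E => -> -> -> /tuple_map_val_inj.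
    case: u1 {H1 E} => [[pre1 y1] s1]; case: u2 {H2} => [[pre2 y2] s2] /= -> /tuple_map_val_inj -> /val_inj -> //.
  - move=> w1 w2 /= E; apply: val_inj; have := wn w1; have := wn w2.
    move: E; rewrite /m => E H2 H1.
    have : (w1.+1 * l = w2.+1 * l)%N by lia.
    by move/eqP; rewrite eqn_pmul2r // => /eqP [].
  - move=> w r; apply/subsetP => x /imsetP [u Hu ->].
    have [_ B1 C1] := Fprops w r u Hu.
    move: (Hu); rewrite !inE => /andP [/andP [_ /andP [/eqP Hw _]] Hs].
    apply/existsP; exists w; rewrite /= B1 C1 size_tuple eqxx /= Hw.
    exact: Hs.
  - move=> w r x /imsetP [u Hu ->].
    have [_ B1 _] := Fprops w r u Hu.
    move: Hu; rewrite !inE => /andP [/andP [_ /andP [/eqP Hw _]] _].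
    by rewrite B1 size_tuple Hw.
apply: Order.POrderTheory.le_trans (_ : _ <= (\sum_(w < n %/ l) \sum_(r < (m w).+1)
   (p ^ l * Nwords p l (m w) r * C2card t (r + w) r (astar r w) (xi r)))%N%:R) _; last by rewrite ler_nat.
rewrite natr_sum mulr_sumr; apply: ler_sum => w _.
rewrite natr_sum mulr_sumr; apply: ler_sum => r _.
rewrite mulrA ler_pdivrMr ?ltr0n ?expn_gt0 //.
rewrite -!natrM ler_nat mulnA -[X in (_ <= X)%N]mulnA; apply: leq_mul => //.
rewrite [X in (_ <= X)%N]mulnC; exact: HB.
Qed.
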